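(* Let $R$ be a ring with unity and involution $*$, and let $a,v\in R$ with $a$ left dual $v$-core invertible. Then there exist $a_1,a_2\in R$ with $va=a_1+a_2$ such that (1) $a_1$ is left dual core invertible, (2) $a_2^2=0$, (3) $a_2^*a_1=0=a_1a_2$. In addition, for any left dual $v$-core inverse $x$ of $a$, the element $x(va)^2$ is left dual core invertible and $x$ is a left dual core inverse of it.
   Context: For $a,v\in R$, $a$ is left dual $v$-core invertible if there exists $x\in R$ such that $axva=a$, $(xva)^*=xva$ and $x^2va=x$; such $x$ is a left dual $v$-core inverse of $a$. An element $y$ is left dual core invertible if there exists $z\in R$ with $yzy=y$, $(zy)^*=zy$ and $z^2y=z$; such $z$ is a left dual core inverse of $y$. *)

(* Defs.v *)
From mathcomp Require Import all_boot all_algebra.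
Set Implicit Arguments. Unset Strict Implicit. Unset Printing Implicit Defensive.
Import GRing.Theory.
Local Open Scope ring_scope.

Definition is_involution (R : pzRingType) (star : R -> R) : Prop :=
  [/\ forall x y, star (x + y) = star x + star y,
      forall x y, star (x * y) = star y * star x
    & forall x, star (star x) = x].

Definition is_left_dual_v_core_inverse (R : pzRingType) (star : R -> R)
  (a v x : R) : Prop :=
  [/\ a * x * v * a = a, star (x * v * a) = x * v * a & x ^+ 2 * v * a = x].

Definition left_dual_v_core_invertible (R : pzRingType) (star : R -> R)
  (a v : R) : Prop := exists x, is_left_dual_v_core_inverse star a v x.

Definition is_left_dual_core_inverse (R : pzRingType) (star : R -> R)
  (y z : R) : Prop :=
  [/\ y * z * y = y, star (z * y) = z * y & z ^+ 2 * y = z].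

Definition left_dual_core_invertible (R : pzRingType) (star : R -> R)
  (y : R) : Prop := exists z, is_left_dual_core_inverse star y z.

(* Main.v *)
Require Import Defs.
From mathcomp Require Import all_boot all_algebra.
Import GRing.Theory.
Local Open Scope ring_scope.

Lemma aux (R : pzRingType) (star : R -> R) (Hstar : is_involution star) (b x : R)
  (hb : b * x * b = b) (hs : star (x * b) = x * b) (hx : x ^+ 2 * b = x) :
  (exists a1 a2 : R,
     [/\ b = a1 + a2,
         left_dual_core_invertible star a1,
         a2 ^+ 2 = 0,
         star a2 * a1 = 0
       & a1 * a2 = 0])
  /\ (left_dual_core_invertible star (x * b ^+ 2) /\
     is_left_dual_core_inverse star (x * b ^+ 2) x).
Proof.
case: Hstar => sD sM sK.
have hx' : x * x * b = x by rewrite -expr2.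
have s0 : star 0 = 0.
  have h := sD 0 0; rewrite addr0 in h.
  by apply: (@addrI _ (star 0)); rewrite addr0 -h.
have f1 : b * (x * b * b) = b * b by rewrite !mulrA hb.
have f2 : x * b * b * (x * b * b) = x * b * b * b.
  have -> : x*b*b*(x*b*b) = (x*b)*(b*x*b)*b by rewrite !mulrA.
  by rewrite hb.
have core : is_left_dual_core_inverse star (x * b ^+ 2) x.
  split.
  - rewrite expr2 !mulrA.
    have -> : x*b*b*x*x*b*b = x*b*b*(x*x*b)*b by rewrite !mulrA.
    rewrite hx'.
    have -> : x*b*b*x*b = x*b*(b*x*b) by rewrite !mulrA.
    by rewrite hb.
  - by rewrite expr2 !mulrA hx'.
  - rewrite !expr2.
    have -> : x*x*(x*(b*b)) = x*(x*x*b)*b by rewrite !mulrA.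
    by rewrite hx' hx'.
split; last by split => //; exists x.
exists (x * b ^+ 2), (b - x * b ^+ 2).
have e : (x * b) * (b - x * b ^+ 2) = 0.
  rewrite expr2 mulrBr !mulrA.
  have -> : x*b*x*b*b = x*(b*x*b)*b by rewrite !mulrA.
  by rewrite hb subrr.
split.
- by rewrite addrC subrK.
- by exists x.
- by rewrite !expr2 !mulrA mulrBl !mulrBr f1 f2 !subrr ?subr0 ?oppr0 ?addr0.
- have : star (b - x * b ^+ 2) * (x * b) = 0 by rewrite -hs -sM e s0.
  move=> h.
  have -> : star (b - x*b^+2) * (x*b^+2) = star (b - x*b^+2) * (x*b) * b
    by rewrite expr2 !mulrA.
  by rewrite h mul0r.
- by rewrite !expr2 !mulrA mulrBr f2 subrr.
Qed.

Theorem theorem3p3 (R : pzRingType) (star : R -> R)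
  (Hstar : is_involution star) (a v : R)
  (Ha : left_dual_v_core_invertible star a v) :
  (exists a1 a2 : R,
     [/\ v * a = a1 + a2,
         left_dual_core_invertible star a1,
         a2 ^+ 2 = 0,
         star a2 * a1 = 0
       & a1 * a2 = 0])
  /\
  (forall x : R, is_left_dual_v_core_inverse star a v x ->
     left_dual_core_invertible star (x * (v * a) ^+ 2) /\
     is_left_dual_core_inverse star (x * (v * a) ^+ 2) x).
Proof.
have H : forall x, is_left_dual_v_core_inverse star a v x ->
  (v * a) * x * (v * a) = v * a /\ star (x * (v * a)) = x * (v * a)
  /\ x ^+ 2 * (v * a) = x.
  move=> x [h1 h2 h3]; split; last by rewrite !mulrA.
  have -> : v*a*x*(v*a) = v*(a*x*v*a) by rewrite !mulrA.
  by rewrite h1.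
split.
- case: Ha => x /H [h1 [h2 h3]].
  by case: (@aux R star Hstar (v*a) x h1 h2 h3).
- move=> x /H [h1 [h2 h3]].
  by case: (@aux R star Hstar (v*a) x h1 h2 h3).
Qed.
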